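(* Let $P(X,Y,t)=\big(X+\frac1X-2\big)\big(Y+\frac1Y+2\big)+2i\dfrac{(t-i)^4}{t^3-t}$ and $D=\{(X,Y,t)\in(\mathbb{C}^\times)^3 : P(X,Y,t)=0,\ |X|=|Y|=1,\ |t|>1\}$. Let $C_1$ (resp. $C_2$) be the circle with center $1$ (resp. $-1$) passing through $i$ in the complex plane. Then the image of $D$ under $(X,Y,t)\mapsto t$ is the union of the two arcs $C_1\cap\{|t|>1\}$ and $C_2\cap\{|t|>1\}$. *)

(* Defs.v *)
From HB Require Import structures.
From mathcomp Require Import all_boot all_order all_algebra.
From mathcomp Require Import complex.
From mathcomp Require Import reals.
Set Implicit Arguments. Unset Strict Implicit. Unset Printing Implicit Defensive.
Import Order.TTheory GRing.Theory Num.Theory ComplexField.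
Local Open Scope ring_scope.
Local Open Scope complex_scope.

Definition Ppoly (R : realType) (X Y t : R[i]) : R[i] :=
  (X + X^-1 - 2) * (Y + Y^-1 + 2) + 2 * 'i * (t - 'i) ^+ 4 / (t ^+ 3 - t).

Definition inD (R : realType) (X Y t : R[i]) : Prop :=
  [/\ X != 0, Y != 0, t != 0, Ppoly X Y t = 0 &
      [/\ `|X| = 1, `|Y| = 1 & 1 < `|t|]].

Definition onC1 (R : realType) (t : R[i]) : Prop := `|t - 1| = `|'i - 1|.
Definition onC2 (R : realType) (t : R[i]) : Prop := `|t - (-1)| = `|'i - (-1)|.

(* Main.v *)
Require Import Defs.
From HB Require Import structures.
From mathcomp Require Import all_boot all_order all_algebra.
From mathcomp Require Import complex.
From mathcomp Require Import reals.
From mathcomp Require Import ring lra.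
Import Order.TTheory GRing.Theory Num.Theory ComplexField.
Local Open Scope ring_scope.
Local Open Scope complex_scope.

Section S.
Context {R : realType}.
Definition Mf (a b : R) := a^+3 - 3*a*b^+2 - a.
Definition Nf (a b : R) := 3*a^+2*b - b^+3 - b.
Definition Af (a b : R) := 8*a*(b-1)*((b-1)^+2 - a^+2).
Definition Bf (a b : R) := 2*a^+4 - 12*a^+2*(b-1)^+2 + 2*(b-1)^+4.

Lemma cE (a b k : R) :
  k%:C * ((a +i* b) ^+ 3 - (a +i* b)) + 2 * 'i * ((a +i* b) - 'i) ^+ 4 =
  (k * Mf a b + Af a b) +i* (k * Nf a b + Bf a b).
Proof.
by apply/eqP; rewrite eq_complex /=; apply/andP; split; apply/eqP;
  rewrite /Mf /Af /Nf /Bf; ring.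
Qed.

Lemma normsq (x y : R[i]) :
  `|x| = `|y| <-> complex.Re x ^+ 2 + complex.Im x ^+ 2 = complex.Re y ^+ 2 + complex.Im y ^+ 2.
Proof.
rewrite !normc_def; split => [/complexI H | ->] //.
rewrite -(@sqr_sqrtr _ (complex.Re x ^+ 2 + complex.Im x ^+ 2)) ?H ?sqr_sqrtr //;
  by rewrite addr_ge0 // sqr_ge0.
Qed.

Lemma gt1 (x : R[i]) : 1 < `|x| -> 1 < complex.Re x ^+ 2 + complex.Im x ^+ 2.
Proof.
rewrite normc_def.
have -> : (1 : R[i]) = (1 : R)%:C by [].
rewrite ltcR => H.
have h0 : 0 <= complex.Re x ^+ 2 + complex.Im x ^+ 2 by rewrite addr_ge0 // sqr_ge0.
rewrite -(sqr_sqrtr h0).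
move: H; set u := Num.sqrt _ => H; nra.
Qed.

Lemma unit1 (x : R[i]) : `|x| = 1 -> complex.Re x ^+ 2 + complex.Im x ^+ 2 = 1.
Proof.
move=> H; have : `|x| = `|1| by rewrite normr1.
by move/normsq => ->; rewrite /=; ring.
Qed.

Lemma invu (c d : R) : c ^+ 2 + d ^+ 2 = 1 -> (c +i* d)^-1 = c -i* d.
Proof.
move=> H.
have Hx : (c +i* d) != 0.
  apply/negP => /eqP; case => hc hd; move: H; rewrite hc hd; nra.
have H1 : (c +i* d) * (c -i* d) = 1.
  apply/eqP; rewrite eq_complex /=; apply/andP; split; apply/eqP; nra.
by rewrite -[(c +i* d)^-1]mulr1 -H1 mulKf.
Qed.

Lemma uX (c d : R) : c ^+ 2 + d ^+ 2 = 1 ->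
  (c +i* d) + (c +i* d)^-1 - 2 = (2 * c - 2)%:C /\
  (c +i* d) + (c +i* d)^-1 + 2 = (2 * c + 2)%:C.
Proof.
move=> H; rewrite invu //; split;
apply/eqP; rewrite eq_complex /=; apply/andP; split; apply/eqP; ring.
Qed.

Lemma nz3 (t : R[i]) : 1 < `|t| -> t ^+ 3 - t != 0.
Proof.
move=> H.
have -> : t ^+ 3 - t = t * (t - 1) * (t + 1) by ring.
rewrite !mulf_neq0 //; apply/negP => /eqP E.
- by move: H; rewrite E normr0 ltr10.
- by move: H; move/eqP: E; rewrite subr_eq0 => /eqP ->; rewrite normr1 ltxx.
- by move: H; move/eqP: E; rewrite addr_eq0 => /eqP ->; rewrite normrN normr1 ltxx.
Qed.

Lemma clear (k : R) (t W : R[i]) : t ^+ 3 - t != 0 ->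
  (k%:C + W / (t ^+ 3 - t) = 0 <-> k%:C * (t ^+ 3 - t) + W = 0).
Proof.
move=> Hd.
have -> : k%:C + W / (t ^+ 3 - t) = (k%:C * (t ^+ 3 - t) + W) / (t ^+ 3 - t).
  by rewrite mulrDl mulfK.
split => [/eqP | ->]; last by rewrite mul0r.
by rewrite mulf_eq0 invr_eq0 (negbTE Hd) orbF => /eqP.
Qed.


Lemma fwd (a b c e : R) : c ^+ 2 <= 1 -> e ^+ 2 <= 1 -> 1 < a ^+ 2 + b ^+ 2 ->
  ((2*c-2)*(2*e+2)) * Mf a b + Af a b = 0 ->
  ((2*c-2)*(2*e+2)) * Nf a b + Bf a b = 0 ->
  (a - 1) ^+ 2 + b ^+ 2 = 2 \/ (a + 1) ^+ 2 + b ^+ 2 = 2.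
Proof.
set k := (2*c-2)*(2*e+2) => hc he hab h1 h2.
have hc1 : c <= 1 by nra.
have hc2 : -1 <= c by nra.
have he1 : e <= 1 by nra.
have he2 : -1 <= e by nra.
have hk1 : k <= 0.
  rewrite /k -oppr_ge0 -mulNr; apply: mulr_ge0; lra.
have hk2 : -16 <= k.
  have : 0 <= (c + 1) * (e + 1) by apply: mulr_ge0; lra.
  have : 0 <= (1 - c) * (1 - e) by apply: mulr_ge0; lra.
  rewrite /k; nra.
have E : 2 * a * (a^+2 + b^+2 - 1) * ((a - 1) ^+ 2 + b ^+ 2 - 2) * ((a + 1) ^+ 2 + b ^+ 2 - 2)
   = (k * Nf a b + Bf a b) * Mf a b - (k * Mf a b + Af a b) * Nf a b.
  by rewrite /Mf /Nf /Af /Bf; ring.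
rewrite h1 h2 !mul0r subrr in E.
move/eqP: E; rewrite !mulf_eq0 -!orbA => /orP [/eqP H|/or4P [/eqP|/eqP|/eqP|/eqP] H].
- by move: H; lra.
- exfalso; rewrite H in h2; move: h2; rewrite /Nf /Bf.
  have hb : 1 < b ^+ 2 by move: hab; rewrite H; nra.
  case: (ltrP 0 b) => hb0.
  + have hb1 : 1 < b by nra.
    have : 0 < (b - 1) ^+ 4 by rewrite exprn_gt0 // subr_gt0.
    have : 0 <= - k * (b ^+ 3 + b) by rewrite mulr_ge0 // ?oppr_ge0 //; nra.
    move=> u v w; nra.
  + have hb1 : b < -1 by nra.
    have : 0 < (b + 1) ^+ 4 by rewrite exprn_even_gt0 //; apply/negP => /eqP; lra.
    have : 0 <= (16 + k) * (- (b ^+ 3 + b)) by rewrite mulr_ge0 //; nra.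
    move=> u v w; nra.
- by move: hab; rewrite (_ : a ^+ 2 + b ^+ 2 = 1) ?ltxx //; lra.
- by left; lra.
- by right; lra.
Qed.

Lemma bwd1 (a b : R) : (a - 1) ^+ 2 + b ^+ 2 = 2 -> 1 < a ^+ 2 + b ^+ 2 ->
  exists c : R, [/\ c ^+ 2 <= 1, (8*c-8) * Mf a b + Af a b = 0 & (8*c-8) * Nf a b + Bf a b = 0].
Proof.
move=> h hab.
have ha : 0 < 1 + 2 * a by nra.
have hC : b ^+ 2 + a ^+ 2 - 2 * a - 1 = 0 by lra.
have hu : 1 + 2 * a != 0 by rewrite gt_eqF.
exists (b * (1 + a) / (1 + 2 * a)); split.
- rewrite expr_div_n ler_pdivrMr ?exprn_gt0 // mul1r.
  have -> : (b * (1 + a)) ^+ 2 = (1 + 2 * a) ^+ 2 - a ^+ 4 + (b ^+ 2 + a ^+ 2 - 2 * a - 1) * (1 + a) ^+ 2 by ring.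
  rewrite hC mul0r addr0; nra.
- have -> : (8 * (b * (1 + a) / (1 + 2 * a)) - 8) * Mf a b + Af a b
    = ((8 * b * (1 + a) - 8 * (1 + 2 * a)) * Mf a b + (1 + 2 * a) * Af a b) / (1 + 2 * a).
    by field.
  have -> : (8 * b * (1 + a) - 8 * (1 + 2 * a)) * Mf a b + (1 + 2 * a) * Af a b
    = (b ^+ 2 + a ^+ 2 - 2 * a - 1) * (-16 * a * b - 8 * a ^+ 2 * b).
    by rewrite /Mf /Af; ring.
  by rewrite hC !mul0r.
- have -> : (8 * (b * (1 + a) / (1 + 2 * a)) - 8) * Nf a b + Bf a b
    = ((8 * b * (1 + a) - 8 * (1 + 2 * a)) * Nf a b + (1 + 2 * a) * Bf a b) / (1 + 2 * a).
    by field.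
  have -> : (8 * b * (1 + a) - 8 * (1 + 2 * a)) * Nf a b + (1 + 2 * a) * Bf a b
    = (b ^+ 2 + a ^+ 2 - 2 * a - 1) * (-2 - 6 * b ^+ 2 - 4 * a * b ^+ 2 + 10 * a ^+ 2 + 4 * a ^+ 3).
    by rewrite /Nf /Bf; ring.
  by rewrite hC !mul0r.
Qed.

Lemma bwd2 (a b : R) : (a + 1) ^+ 2 + b ^+ 2 = 2 -> 1 < a ^+ 2 + b ^+ 2 ->
  exists c : R, [/\ c ^+ 2 <= 1, (8*c-8) * Mf a b + Af a b = 0 & (8*c-8) * Nf a b + Bf a b = 0].
Proof.
move=> h hab.
have ha : 0 < 1 - 2 * a by nra.
have hC : b ^+ 2 + a ^+ 2 + 2 * a - 1 = 0 by lra.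
have hu : 1 - 2 * a != 0 by rewrite gt_eqF.
exists (b * (1 - a) / (1 - 2 * a)); split.
- rewrite expr_div_n ler_pdivrMr ?exprn_gt0 // mul1r.
  have -> : (b * (1 - a)) ^+ 2 = (1 - 2 * a) ^+ 2 - a ^+ 4 + (b ^+ 2 + a ^+ 2 + 2 * a - 1) * (1 - a) ^+ 2 by ring.
  rewrite hC mul0r addr0; nra.
- have -> : (8 * (b * (1 - a) / (1 - 2 * a)) - 8) * Mf a b + Af a b
    = ((8 * b * (1 - a) - 8 * (1 - 2 * a)) * Mf a b + (1 - 2 * a) * Af a b) / (1 - 2 * a).
    by field.
  have -> : (8 * b * (1 - a) - 8 * (1 - 2 * a)) * Mf a b + (1 - 2 * a) * Af a b
    = (b ^+ 2 + a ^+ 2 + 2 * a - 1) * (-16 * a * b + 8 * a ^+ 2 * b).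
    by rewrite /Mf /Af; ring.
  by rewrite hC !mul0r.
- have -> : (8 * (b * (1 - a) / (1 - 2 * a)) - 8) * Nf a b + Bf a b
    = ((8 * b * (1 - a) - 8 * (1 - 2 * a)) * Nf a b + (1 - 2 * a) * Bf a b) / (1 - 2 * a).
    by field.
  have -> : (8 * b * (1 - a) - 8 * (1 - 2 * a)) * Nf a b + (1 - 2 * a) * Bf a b
    = (b ^+ 2 + a ^+ 2 + 2 * a - 1) * (-2 - 6 * b ^+ 2 + 4 * a * b ^+ 2 + 10 * a ^+ 2 - 4 * a ^+ 3).
    by rewrite /Nf /Bf; ring.
  by rewrite hC !mul0r.
Qed.
End S.
Arguments gt1 {R x}. Arguments nz3 {R t}. Arguments uX {R c d}. Arguments unit1 {R x}.
Arguments fwd {R a b c e}. Arguments bwd1 {R a b}. Arguments bwd2 {R a b}.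

Lemma rC (R : realType) (x y : R) : x%:C * y%:C = (x * y)%:C.
Proof. by rewrite rmorphM. Qed.

Theorem lemma9p13 (R : realType) (t : R[i]) :
  (exists X Y : R[i], inD X Y t) <->
  ((onC1 t /\ 1 < `|t|) \/ (onC2 t /\ 1 < `|t|)).
Proof.
split.
- move=> [X [Y [hX hY ht hP [nX nY nt]]]].
  move: hP nX nY nt; rewrite /Ppoly /onC1 /onC2.
  case: X {hX} => c d; case: Y {hY} => e f; case: t {ht} => a b.
  move=> hP /unit1 /= hc /unit1 /= he nt.
  have hab := gt1 nt; rewrite /= in hab.
  move: hP; rewrite (uX hc).1 (uX he).2 rC.
  move/(clear _ _ _ (nz3 nt)); rewrite cE => /eqP; rewrite eq_complex /=.
  case/andP => /eqP h1 /eqP h2.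
  have hc' : c ^+ 2 <= 1 by nra.
  have he' : e ^+ 2 <= 1 by nra.
  case: (fwd hc' he' hab h1 h2) => H; [left|right]; split => //;
    apply/normsq => /=; lra.
- rewrite /onC1 /onC2; case: t => a b.
  move=> H; have nt : 1 < `|a +i* b| by case: H => -[].
  have hab := gt1 nt; rewrite /= in hab.
  have [c [hc h1 h2]] : exists c : R, [/\ c ^+ 2 <= 1, (8*c-8) * Mf a b + Af a b = 0 & (8*c-8) * Nf a b + Bf a b = 0].
    case: H => -[/normsq /= H _].
    + by apply: bwd1 => //; lra.
    + by apply: bwd2 => //; lra.
  have h0 : 0 <= 1 - c ^+ 2 by lra.
  set d := Num.sqrt (1 - c ^+ 2).
  have hcd : c ^+ 2 + d ^+ 2 = 1 by rewrite /d sqr_sqrtr //; ring.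
  have nX : `|c +i* d| = 1.
    by rewrite normc_def /= hcd sqrtr1.
  exists (c +i* d), 1; split.
  + by apply/negP => /eqP E; move: nX; rewrite E normr0 => /eqP; rewrite eq_sym oner_eq0.
  + exact: oner_neq0.
  + by apply/negP => /eqP E; move: nt; rewrite E normr0 ltr10.
  + rewrite /Ppoly (uX hcd).1.
    have -> : (1 : R[i]) + 1^-1 + 2 = (4 : R)%:C.
      by rewrite invr1; apply/eqP; rewrite eq_complex /=; apply/andP; split; apply/eqP; ring.
    rewrite rC; apply/(clear _ _ _ (nz3 nt)); rewrite cE.
    apply/eqP; rewrite eq_complex /=; apply/andP; split; apply/eqP.
    * by rewrite -h1; congr (_ * _ + _); ring.
    * by rewrite -h2; congr (_ * _ + _); ring.
  + by split => //; rewrite normr1.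
Qed.
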